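(* Let $r>0$ and let $G$ be a hyperbolic uniform disk graph with radius $r$. Let $p\in\mathbb{H}^2$, let $\varphi\in(0,\pi/2]$, and let $m$ be a line through $p$ such that for every vertex $v$ of $G$ (disk center, assumed distinct from $p$) the line through $p$ and $v$ makes an angle of at least $\varphi$ with $m$. Then the subgraph of $G$ induced by the vertices at hyperbolic distance at most $r$ from $m$ can be covered with $\mathcal{O}\big(\log\frac{1}{\varphi}\cdot\big(1+\frac{1}{r}\big)\big)$ cliques.
   Context: $\mathbb{H}^2$ denotes the hyperbolic plane of Gaussian curvature $-1$. A hyperbolic uniform disk graph with radius $r$ is the intersection graph of a finite family of closed hyperbolic disks of radius $r$ in $\mathbb{H}^2$: vertices are the disks (identified with their centers), and two vertices are adjacent iff their centers have hyperbolic distance at most $2r$. The $\mathcal{O}$-bound has an absolute implied constant (independent of $G$, $r$, $p$, $m$) and is understood asymptotically as $\varphi\to 0$. *)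

(* Defs.v *)
From Stdlib Require Import Reals Lra List.
Open Scope R_scope.

(* Vectors of R^{2,1}; the third coordinate is the time-like one. *)
Definition V3 := (R * R * R)%type.

Definition vadd (a b : V3) : V3 :=
  let '(a1, a2, a3) := a in let '(b1, b2, b3) := b in (a1 + b1, a2 + b2, a3 + b3).
Definition vscale (c : R) (a : V3) : V3 :=
  let '(a1, a2, a3) := a in (c * a1, c * a2, c * a3).

Definition mink (a b : V3) : R :=
  let '(a1, a2, a3) := a in let '(b1, b2, b3) := b in a1 * b1 + a2 * b2 - a3 * b3.

(* The hyperbolic plane (curvature -1): upper sheet of <x,x> = -1. *)
Definition in_H2 (x : V3) : Prop :=
  mink x x = -1 /\ 0 < snd x.

Definition acosh (t : R) : R := ln (t + sqrt (t * t - 1)).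

Definition hdist (x y : V3) : R := acosh (- mink x y).

Definition adj (r : R) (x y : V3) : Prop := hdist x y <= 2 * r.

Definition tangent_at (p u : V3) : Prop := mink p u = 0 /\ u <> (0, 0, 0).

Definition line_pt (p u : V3) (t : R) : V3 :=
  vadd (vscale (cosh t) p) (vscale (sinh t / sqrt (mink u u)) u).
Definition on_line (p u x : V3) : Prop := exists t : R, x = line_pt p u t.

(* x is at hyperbolic distance at most r from the line m (m is closed, so the
   infimum distance is attained). *)
Definition near_line (p u : V3) (r : R) (x : V3) : Prop :=
  exists q, on_line p u q /\ hdist x q <= r.

(* Initial tangent vector at p of the geodesic from p to v. *)
Definition dir (p v : V3) : V3 := vadd v (vscale (mink v p) p).

(* Angle in [0, pi] between two tangent vectors (Riemannian metric = mink). *)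
Definition vec_angle (a b : V3) : R :=
  acos (mink a b / (sqrt (mink a a) * sqrt (mink b b))).

Definition line_angle (a b : V3) : R :=
  Rmin (vec_angle a b) (PI - vec_angle a b).

Definition clique_coverable (r : R) (V : list V3) (S : V3 -> Prop) (k : nat) : Prop :=
  exists Cl : nat -> V3 -> Prop,
    (forall i x, Cl i x -> In x V /\ S x) /\
    (forall i x y, Cl i x -> Cl i y -> x <> y -> adj r x y) /\
    (forall x, In x V -> S x -> exists i, (i < k)%nat /\ Cl i x).

(* Main.v *)
Require Import Defs.
From Stdlib Require Import Reals Lra Lia Psatz List ZArith.
Open Scope R_scope.


Definition det3 (p u x : V3) : R :=
  let '(p1,p2,p3) := p in let '(u1,u2,u3) := u in let '(x1,x2,x3) := x in
  p1*(u2*x3 - u3*x2) - p2*(u1*x3 - u3*x1) + p3*(u1*x2 - u2*x1).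

Lemma gram_id (p u x y : V3) :
  det3 p u x * det3 p u y =
  - (mink p p * (mink u u * mink x y - mink u y * mink x u)
     - mink p u * (mink p u * mink x y - mink u y * mink x p)
     + mink p y * (mink p u * mink x u - mink u u * mink x p)).
Proof.
  destruct p as [[p1 p2] p3], u as [[u1 u2] u3], x as [[x1 x2] x3], y as [[y1 y2] y3].
  simpl. ring.
Qed.

Lemma mink_sym a b : mink a b = mink b a.
Proof. destruct a as [[? ?] ?], b as [[? ?] ?]; simpl; ring. Qed.

Lemma mink_lin x p u (al be : R) :
  mink x (vadd (vscale al p) (vscale be u)) = al * mink x p + be * mink x u.
Proof. destruct x as [[? ?] ?], p as [[? ?] ?], u as [[? ?] ?]; simpl; ring. Qed.

Lemma mink_dir_dir x p : mink (dir p x) (dir p x) =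
  mink x x + 2 * mink x p * mink x p + mink x p * mink x p * mink p p.
Proof. destruct x as [[? ?] ?], p as [[? ?] ?]; simpl; ring. Qed.

Lemma mink_dir_u x p u : mink (dir p x) u = mink x u + mink x p * mink p u.
Proof. destruct x as [[? ?] ?], p as [[? ?] ?], u as [[? ?] ?]; simpl; ring. Qed.

Lemma H2_pos (x p : V3) : in_H2 x -> in_H2 p -> 0 < - mink x p.
Proof.
  destruct x as [[x1 x2] x3], p as [[p1 p2] p3]; unfold in_H2; simpl; intros [Hx Hx3] [Hp Hp3].
  assert (CS : (x1*p1+x2*p2)^2 <= (x1*x1+x2*x2)*(p1*p1+p2*p2)) by (pose proof (pow2_ge_0 (x1*p2-x2*p1)); nra).
  assert (E: (x1*x1+x2*x2)*(p1*p1+p2*p2) = (x3*x3-1)*(p3*p3-1)) by nra.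
  assert ((x1*p1+x2*p2)^2 < (x3*p3)^2) by nra.
  assert (0 < x3*p3) by nra.
  nra.
Qed.

Lemma tangent_pos (p u : V3) : in_H2 p -> tangent_at p u -> 0 < mink u u.
Proof.
  destruct p as [[p1 p2] p3], u as [[u1 u2] u3]; unfold in_H2, tangent_at; simpl; intros [Hp Hp3] [Hu Hne].
  destruct (Req_dec u1 0) as [e1|n1]; [destruct (Req_dec u2 0) as [e2|n2]|].
  - subst. exfalso. apply Hne. assert (Hz: p3*u3 = 0) by lra. apply Rmult_integral in Hz. destruct Hz as [Hz|Hz]; [lra|subst; reflexivity].
  - assert (CS : (u1*p1+u2*p2)^2 <= (u1*u1+u2*u2)*(p1*p1+p2*p2)) by (pose proof (pow2_ge_0 (u1*p2-u2*p1)); nra).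
    assert (0 < u1*u1+u2*u2) by nra.
    assert (E1: u3*p3 = u1*p1+u2*p2) by lra.
    assert (E2: p1*p1+p2*p2 = p3*p3-1) by lra.
    rewrite E2, <- E1 in CS.
    assert ((u3*p3)^2 < (u1*u1+u2*u2)*(p3*p3)) by nra.
    assert (u3*u3 < u1*u1+u2*u2) by (apply (Rmult_lt_reg_r (p3*p3)); nra).
    lra.
  - assert (CS : (u1*p1+u2*p2)^2 <= (u1*u1+u2*u2)*(p1*p1+p2*p2)) by (pose proof (pow2_ge_0 (u1*p2-u2*p1)); nra).
    assert (0 < u1*u1+u2*u2) by nra.
    assert (E1: u3*p3 = u1*p1+u2*p2) by lra.
    assert (E2: p1*p1+p2*p2 = p3*p3-1) by lra.
    rewrite E2, <- E1 in CS.
    assert ((u3*p3)^2 < (u1*u1+u2*u2)*(p3*p3)) by nra.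
    assert (u3*u3 < u1*u1+u2*u2) by (apply (Rmult_lt_reg_r (p3*p3)); nra).
    lra.
Qed.

Definition ca (p x : V3) := - mink x p.
Definition cb (p u x : V3) := mink x u / sqrt (mink u u).
Definition cc (p u x : V3) := det3 p u x / sqrt (mink u u).

Lemma parseval p u x y : in_H2 p -> tangent_at p u ->
  mink x y = - ca p x * ca p y + cb p u x * cb p u y + cc p u x * cc p u y.
Proof.
  intros Hp Hu.
  pose proof (tangent_pos p u Hp Hu) as HU.
  assert (Hpp : mink p p = -1) by (apply Hp).
  assert (Hpu : mink p u = 0) by (apply Hu).
  pose proof (gram_id p u x y) as G.
  rewrite Hpp, Hpu in G.
  rewrite (mink_sym p y), (mink_sym u y) in G.
  unfold ca, cb, cc.
  assert (Hs : sqrt (mink u u) * sqrt (mink u u) = mink u u) by (apply sqrt_sqrt; lra).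
  assert (Hs0 : sqrt (mink u u) <> 0) by (apply Rgt_not_eq, sqrt_lt_R0; lra).
  replace (mink x u / sqrt (mink u u) * (mink y u / sqrt (mink u u)))
    with (mink x u * mink y u / (sqrt (mink u u) * sqrt (mink u u))) by (field; auto).
  replace (det3 p u x / sqrt (mink u u) * (det3 p u y / sqrt (mink u u)))
    with (det3 p u x * det3 p u y / (sqrt (mink u u) * sqrt (mink u u))) by (field; auto).
  rewrite Hs, G. field. lra.
Qed.


Lemma ln_le' x y : 0 < x -> x <= y -> ln x <= ln y.
Proof. intros H1 H2. destruct (Req_dec x y) as [->|n]; [lra|]. left; apply ln_increasing; lra. Qed.

Lemma exp_le' x y : x <= y -> exp x <= exp y.
Proof. intros H. destruct (Req_dec x y) as [->|n]; [lra|]. left; apply exp_increasing; lra. Qed.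

Lemma acosh_le_inv Y r : 1 <= Y -> acosh Y <= r -> 2 * exp r * Y <= exp r ^ 2 + 1.
Proof.
  intros HY H. unfold acosh in H.
  assert (H0 : 0 <= Y * Y - 1) by nra.
  pose proof (sqrt_pos (Y*Y-1)).
  assert (Hz : Y + sqrt (Y*Y-1) <= exp r).
  { rewrite <- (exp_ln (Y + sqrt (Y*Y-1))) by lra. apply exp_le'; exact H. }
  pose proof (sqrt_sqrt (Y*Y-1) H0).
  assert (Y*Y - 1 <= (exp r - Y)*(exp r - Y)) by nra.
  nra.
Qed.

Lemma acosh_le X s : 0 < X -> 2 * exp s * X <= exp s ^ 2 + 1 -> 0 <= s -> acosh X <= s.
Proof.
  intros HX H Hs. unfold acosh.
  assert (HE : 1 <= exp s) by (pose proof (exp_ineq1_le s); lra).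
  assert (HXE : X <= exp s) by nra.
  assert (Hq : sqrt (X*X-1) <= exp s - X).
  { rewrite <- (sqrt_square (exp s - X)) by lra. apply sqrt_le_1_alt. nra. }
  pose proof (sqrt_pos (X*X-1)).
  rewrite <- (ln_exp s). apply ln_le'; lra.
Qed.

Lemma sin_half phi : 0 < phi -> phi <= 1/5 -> phi / 2 <= sin phi.
Proof.
  intros H1 H2.
  assert (Hpi : 3 < PI) by (pose proof PI2_3_2; lra).
  destruct (SIN phi) as [Hl _]; try lra.
  assert (E : sin_lb phi = phi - phi^3/6 + phi^5/120 - phi^7/5040).
  { unfold sin_lb, sin_approx, sin_term. simpl sum_f_R0. simpl. field. }
  rewrite E in Hl.
  assert (phi^3 <= phi / 25) by (simpl; nra).
  assert (0 <= phi^5/120 - phi^7/5040).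
  { assert (0 < phi^5) by (apply pow_lt; lra).
    replace (phi^7) with (phi^5*(phi*phi)) by ring.
    assert (phi*phi <= 1) by nra.
    assert (phi^5*(phi*phi) <= phi^5) by nra. lra. }
  lra.
Qed.

Lemma ln_lb h : 0 <= h -> h / (1 + h) <= ln (1 + h).
Proof.
  intros Hh.
  set (y := h / (1+h)).
  assert (Hy : 1 - y = / (1+h)) by (unfold y; field; lra).
  pose proof (exp_ineq1_le (- y)) as E.
  rewrite exp_Ropp in E.
  assert (exp y <= 1 + h).
  { pose proof (exp_pos y).
    assert (/ (1+h) <= / exp y) by lra.
    apply Rinv_le_contravar in H0; [|apply Rinv_0_lt_compat; lra].
    rewrite !Rinv_inv in H0. exact H0. }
  rewrite <- (ln_exp y). apply ln_le'; [apply exp_pos|assumption].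
Qed.

Lemma find_j (rho z : R) (K : nat) : 1 < rho -> 1 <= z -> z < rho ^ K ->
  exists j, (j < K)%nat /\ rho ^ j <= z < rho ^ (S j).
Proof.
  intros Hr Hz. induction K as [|K IH]; intros HK.
  - simpl in HK. lra.
  - destruct (Rlt_dec z (rho ^ K)) as [l|n].
    + destruct (IH l) as [j [Hj1 Hj2]]. exists j; split; [lia|assumption].
    + exists K; split; [lia|]. split; lra.
Qed.


Lemma cosh_sinh t : cosh t * cosh t - sinh t * sinh t = 1 /\ 0 < cosh t.
Proof.
  unfold cosh, sinh. rewrite exp_Ropp. pose proof (exp_pos t).
  split; [field; lra|]. pose proof (Rinv_0_lt_compat _ H). lra.
Qed.

Lemma Y_pos a b c ch sh : a*a - b*b - c*c = 1 -> 0 < a ->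
  ch*ch - sh*sh = 1 -> 0 < ch -> 1 <= a*ch - b*sh /\ 1 + c*c <= (a*ch - b*sh)^2.
Proof.
  intros H1 H2 H3 H4.
  assert (E : (a*ch - b*sh)^2 = 1 + c*c + (a*sh - b*ch)^2).
  { replace (1 + c*c) with ((a*a - b*b)*(ch*ch-sh*sh)) by (rewrite H3; lra). ring. }
  assert (Hb : b*b < a*a) by nra.
  assert (Hs : sh*sh < ch*ch) by nra.
  assert (Hsq : (b*sh)*(b*sh) < (a*ch)*(a*ch)).
  { assert (b*b*(sh*sh) <= b*b*(ch*ch)) by (pose proof (Rle_0_sqr b); unfold Rsqr in *; nra).
    assert (b*b*(ch*ch) < a*a*(ch*ch)) by nra. nra. }
  assert (Hac : 0 < a*ch) by (apply Rmult_lt_0_compat; lra).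
  assert (b*sh < a*ch).
  { destruct (Rlt_dec (b*sh) (a*ch)); [assumption|].
    assert (0 <= b*sh - a*ch) by lra. assert (0 < b*sh + a*ch) by lra.
    assert (0 <= (b*sh - a*ch)*(b*sh + a*ch)) by (apply Rmult_le_pos; lra). nra. }
  assert (0 < a*ch - b*sh) by lra.
  pose proof (pow2_ge_0 (a*sh - b*ch)). pose proof (pow2_ge_0 c).
  split; [|nra].
  destruct (Rle_dec 1 (a*ch-b*sh)) as [l|n]; [exact l|]. exfalso.
  assert ((a*ch-b*sh)^2 < 1) by nra. nra.
Qed.

Definition sgm (e : R) := (e^2 - 1) / (2 * e).

Lemma near_alg c Y e : 0 < e -> 1 <= Y -> 1 + c*c <= Y^2 -> 2 * e * Y <= e^2 + 1 ->
  c*c <= sgm e * sgm e.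
Proof.
  intros He HY Hc H. unfold sgm.
  assert (HY2 : Y <= (e^2+1)/(2*e)) by (apply Rmult_le_reg_l with (2*e); [lra|]; field_simplify; lra).
  assert (Y^2 <= ((e^2+1)/(2*e))^2) by (apply pow_incr; lra).
  assert (E : ((e^2+1)/(2*e))^2 = 1 + (e^2-1)/(2*e)*((e^2-1)/(2*e))) by (field; lra).
  lra.
Qed.

Lemma angle_alg phi z : 0 < phi -> phi <= PI/2 -> -1 <= z <= 1 ->
  phi <= Rmin (acos z) (PI - acos z) -> z * z <= cos phi * cos phi.
Proof.
  intros H1 H2 Hz H.
  pose proof (acos_bound z) as Hb.
  assert (phi <= acos z) by (eapply Rle_trans; [exact H| apply Rmin_l]).
  assert (phi <= PI - acos z) by (eapply Rle_trans; [exact H| apply Rmin_r]).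
  pose proof PI_RGT_0.
  assert (cos (acos z) <= cos phi) by (apply cos_decr_1; lra).
  assert (cos (PI - phi) <= cos (acos z)) by (apply cos_decr_1; lra).
  rewrite Rtrigo_facts.cos_pi_minus in H6. rewrite cos_acos in H5, H6 by lra.
  assert (0 <= cos phi) by (apply cos_ge_0; lra).
  nra.
Qed.

Lemma angle_alg2 b c s phi : 0 < s ->
  let z := b * s / (sqrt (b*b + c*c) * s) in
  (-1 <= z <= 1) /\ (z * z <= cos phi * cos phi -> b*b * (sin phi * sin phi) <= c*c).
Proof.
  intros Hs z.
  pose proof (sin2_cos2 phi) as SC. unfold Rsqr in SC.
  destruct (Req_dec (b*b+c*c) 0) as [e0|n0].
  - assert (b = 0) by nra. assert (c = 0) by nra. subst. unfold z.
    rewrite Rmult_0_l, Rdiv_0_l. split; [lra|]. intros; nra.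
  - assert (Hq : 0 < b*b+c*c) by (pose proof (Rle_0_sqr b); pose proof (Rle_0_sqr c); unfold Rsqr in *; lra).
    pose proof (sqrt_lt_R0 _ Hq) as Hsq. pose proof (sqrt_sqrt _ (Rlt_le _ _ Hq)) as Hss.
    assert (Ez : z = b / sqrt (b*b+c*c)) by (unfold z; field; lra).
    assert (Ez2 : z * z = b*b / (sqrt (b*b+c*c) * sqrt (b*b+c*c))) by (rewrite Ez; field; lra).
    rewrite Hss in Ez2.
    assert (Hz2 : z*z <= 1).
    { rewrite Ez2. apply Rmult_le_reg_r with (b*b+c*c); [lra|]. unfold Rdiv. rewrite Rmult_assoc, Rinv_l by lra. pose proof (Rle_0_sqr c); unfold Rsqr in *; lra. }
    split; [nra|].
    intros Hc. rewrite Ez2 in Hc.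
    assert (b*b <= cos phi * cos phi * (b*b+c*c)).
    { apply Rmult_le_reg_r with (/ (b*b+c*c)); [apply Rinv_0_lt_compat; lra|].
      replace (cos phi * cos phi * (b*b+c*c) * / (b*b+c*c)) with (cos phi * cos phi) by (field; lra).
      unfold Rdiv in Hc; lra. }
    assert (0 <= sin phi * sin phi) by nra.
    assert (0 <= cos phi * cos phi) by nra.
    nra.
Qed.

Lemma clique_alg a b c a' b' c' s m rho :
  a*a - b*b - c*c = 1 -> 0 < a -> a'*a' - b'*b' - c'*c' = 1 -> 0 < a' ->
  0 <= c*c' -> c*c <= s*s -> c'*c' <= s*s -> 0 < m -> m <= 1 -> m <= s -> rho = 1 + m/2 ->
  (a+b)/sqrt(1+c*c) < rho * ((a'+b')/sqrt(1+c'*c')) ->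
  (a'+b')/sqrt(1+c'*c') < rho * ((a+b)/sqrt(1+c*c)) ->
  a*a' - b*b' - c*c' <= 1 + 2*(s*s).
Proof.
  intros Ha Ha0 Hb Hb0 Hcc Hc Hc' Hm0 Hm1 Hms Hrho H1 H2.
  assert (HC2 : sqrt (1+c*c) * sqrt (1+c*c) = 1 + c*c) by (apply sqrt_sqrt; nra).
  assert (HC2' : sqrt (1+c'*c') * sqrt (1+c'*c') = 1 + c'*c') by (apply sqrt_sqrt; nra).
  assert (HC : 0 < sqrt (1+c*c)) by (apply sqrt_lt_R0; nra).
  assert (HC' : 0 < sqrt (1+c'*c')) by (apply sqrt_lt_R0; nra).
  set (C := sqrt (1+c*c)) in *. set (C' := sqrt (1+c'*c')) in *.
  assert (HP : 0 < a + b) by nra. assert (HQ : 0 < a - b) by nra.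
  assert (HP' : 0 < a' + b') by nra. assert (HQ' : 0 < a' - b') by nra.
  set (t := (a+b)/C) in *. set (t' := (a'+b')/C') in *.
  assert (Ht : 0 < t) by (unfold t; apply Rdiv_lt_0_compat; lra).
  assert (Ht' : 0 < t') by (unfold t'; apply Rdiv_lt_0_compat; lra).
  assert (EQ : a - b = C / t) by (unfold t; apply Rmult_eq_reg_l with (a+b); [field_simplify; [nra|lra..] | lra]).
  assert (EQ' : a' - b' = C' / t') by (unfold t'; apply Rmult_eq_reg_l with (a'+b'); [field_simplify; [nra|lra..] | lra]).
  assert (EP : a + b = C * t) by (unfold t; field; lra).
  assert (EP' : a' + b' = C' * t') by (unfold t'; field; lra).
  assert (Eab : a*a' - b*b' = ((a+b)*(a'-b') + (a-b)*(a'+b'))/2) by field.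
  rewrite EQ, EQ', EP, EP' in Eab.
  assert (Eab2 : a*a' - b*b' = C*C' * (t*t + t'*t') / (2*t*t')) by (rewrite Eab; field; lra).
  assert (Hrat : t*t + t'*t' <= (2 + m*m/4) * (t*t')).
  { subst rho. destruct (Rle_dec t' t).
    - assert (t - t' <= m/2 * t') by lra.
      assert ((t-t')*(t-t') <= (m/2*t')*(m/2*t')) by nra.
      assert ((m/2*t')*(m/2*t') <= m*m/4 * (t*t')) by nra.
      nra.
    - assert (t' - t <= m/2 * t) by lra.
      assert ((t'-t)*(t'-t) <= (m/2*t)*(m/2*t)) by nra.
      assert ((m/2*t)*(m/2*t) <= m*m/4 * (t*t')) by nra.
      nra. }
  assert (HCC : 0 < C*C') by nra.
  assert (Hab : a*a' - b*b' <= C*C' * (1 + m*m/8)).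
  { rewrite Eab2. apply Rmult_le_reg_r with (2*t*t'); [nra|].
    unfold Rdiv. rewrite Rmult_assoc, Rinv_l by nra. nra. }
  assert (H2CC : 2*(C*C') <= 2 + c*c + c'*c') by (pose proof (pow2_ge_0 (C - C')); nra).
  assert (Hdiff : (c - c')*(c - c') <= s*s).
  { destruct (Rle_dec (c*c) (c'*c')).
    - assert (c*c <= c*c') by (destruct (Rle_dec 0 c); nra). nra.
    - assert (c'*c' <= c*c') by (destruct (Rle_dec 0 c); nra). nra. }
  assert (C*C' <= 1 + s*s) by lra.
  assert (C*C' * (m*m/8) <= s*s/4).
  { assert (m*m <= s*s) by nra. assert (m*m <= 1) by nra.
    assert (C*C'*(m*m) <= (1 + s*s)*(m*m)) by nra.
    assert ((1+s*s)*(m*m) <= 2*(s*s)) by nra. nra. }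
  nra.
Qed.


Lemma K_facts r phi : 0 < r -> 0 < phi -> phi <= 1/5 ->
  let m := r / (1 + r) in let rho := 1 + m/2 in let M := 1 + 4/phi in
  let L := 2 * ln M / ln rho in let K := Z.to_nat (up L) in
  M * M < rho ^ K /\ INR (2 * K) <= 26 * ln (1/phi) * (1 + 1/r).
Proof.
  intros Hr Hp Hp5 m rho M L K.
  assert (Hm : 0 < m /\ m <= 1) by (unfold m; split; [apply Rdiv_lt_0_compat; lra| apply Rmult_le_reg_r with (1+r); [lra|]; field_simplify; lra]).
  assert (Hm1 : m * (1 + 1/r) = 1) by (unfold m; field; lra).
  assert (Hrho : 1 < rho) by (unfold rho; lra).
  assert (Hlr : m / 3 <= ln rho).
  { pose proof (ln_lb (m/2) ltac:(lra)). unfold rho.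
    assert (m/3 <= m/2/(1+m/2)) by (apply Rmult_le_reg_r with (1+m/2); [lra|]; field_simplify; nra). lra. }
  assert (HM : 1 < M) by (unfold M; assert (0 < 4/phi) by (apply Rdiv_lt_0_compat; lra); lra).
  assert (HlM : 0 < ln M) by (rewrite <- ln_1; apply ln_increasing; lra).
  set (l := ln (1/phi)).
  assert (Hl1 : 1 <= l).
  { unfold l. apply Rle_trans with (ln (exp 1)); [rewrite ln_exp; lra|]. apply ln_le'. apply exp_pos.
    pose proof exp_le_3. assert (5 <= 1/phi).
    { assert (E1 : 1/phi = / phi) by (unfold Rdiv; ring). assert (E2 : 5 = / (1/5)) by field.
      rewrite E1, E2. apply Rinv_le_contravar; lra. } lra. }
  assert (HMl : ln M <= 2 * l).
  { unfold l. replace (2 * ln (1/phi)) with (ln (1/phi * (1/phi))).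
    2:{ rewrite ln_mult; [lra| apply Rdiv_lt_0_compat; lra..]. }
    apply ln_le'; [lra|]. unfold M. apply Rmult_le_reg_r with (phi*phi); [nra|]. field_simplify; nra. }
  assert (HL : L * ln rho = 2 * ln M) by (unfold L; field; lra).
  assert (HL0 : 0 < L) by (unfold L; apply Rdiv_lt_0_compat; lra).
  destruct (archimed L) as [Hu1 Hu2].
  assert (Hup : (0 < up L)%Z) by (apply lt_IZR; simpl; lra).
  assert (HK : INR K = IZR (up L)) by (unfold K; rewrite INR_IZR_INZ, Z2Nat.id; [reflexivity|lia]).
  split.
  - apply ln_lt_inv; [nra| apply pow_lt; lra|].
    rewrite ln_pow by lra. rewrite ln_mult by lra. rewrite HK.
    assert (0 < ln rho) by lra.
    assert (L * ln rho < IZR (up L) * ln rho) by (apply Rmult_lt_compat_r; lra). lra.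
  - rewrite mult_INR, HK. simpl (INR 2).
    assert (HLm : L * m <= 12 * l).
    { assert (L * (m/3) <= L * ln rho) by (apply Rmult_le_compat_l; lra). lra. }
    assert (HL2 : L <= 12 * l * (1 + 1/r)).
    { replace L with (L * m * (1 + 1/r)) by (rewrite Rmult_assoc, Hm1; ring).
      apply Rmult_le_compat_r; [assert (0 < 1/r) by (apply Rdiv_lt_0_compat; lra); lra| lra]. }
    assert (1 <= l * (1 + 1/r)) by (assert (0 < 1/r) by (apply Rdiv_lt_0_compat; lra); nra).
    lra.
Qed.


Lemma norm1 p u x : in_H2 p -> tangent_at p u -> in_H2 x ->
  ca p x * ca p x - cb p u x * cb p u x - cc p u x * cc p u x = 1 /\ 0 < ca p x.
Proof.
  intros Hp Hu Hx. pose proof (parseval p u x x Hp Hu) as E.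
  split; [destruct Hx as [Hx' _]; lra|]. unfold ca. apply H2_pos; auto.
Qed.

Lemma vertex_near p u x r : in_H2 p -> tangent_at p u -> in_H2 x -> 0 < r ->
  near_line p u r x -> cc p u x * cc p u x <= sgm (exp r) * sgm (exp r).
Proof.
  intros Hp Hu Hx Hr [q [[t ->] Hd]].
  destruct (norm1 p u x Hp Hu Hx) as [N Ha].
  pose proof (tangent_pos p u Hp Hu) as HU.
  assert (Hs0 : 0 < sqrt (mink u u)) by (apply sqrt_lt_R0; lra).
  unfold hdist, line_pt in Hd. rewrite mink_lin in Hd.
  assert (EY : - (cosh t * mink x p + sinh t / sqrt (mink u u) * mink x u)
     = ca p x * cosh t - cb p u x * sinh t) by (unfold ca, cb; field; lra).
  rewrite EY in Hd.
  destruct (cosh_sinh t) as [Hcs Hc].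
  destruct (Y_pos _ _ _ _ _ N Ha Hcs Hc) as [HY1 HY2].
  pose proof (acosh_le_inv _ _ HY1 Hd).
  eapply near_alg; [apply exp_pos| exact HY1| exact HY2| exact H].
Qed.

Lemma vertex_angle p u x phi : in_H2 p -> tangent_at p u -> in_H2 x ->
  0 < phi -> phi <= PI/2 -> phi <= line_angle (dir p x) u ->
  cb p u x * cb p u x * (sin phi * sin phi) <= cc p u x * cc p u x.
Proof.
  intros Hp Hu Hx H1 H2 H.
  destruct (norm1 p u x Hp Hu Hx) as [N Ha].
  pose proof (tangent_pos p u Hp Hu) as HU.
  assert (Hs0 : 0 < sqrt (mink u u)) by (apply sqrt_lt_R0; lra).
  assert (Hpp : mink p p = -1) by (apply Hp).
  assert (Hpu : mink p u = 0) by (apply Hu).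
  assert (Hxx : mink x x = -1) by (apply Hx).
  assert (Edd : mink (dir p x) (dir p x) = cb p u x * cb p u x + cc p u x * cc p u x).
  { rewrite mink_dir_dir, Hxx, Hpp. unfold ca in N. nra. }
  assert (Edu : mink (dir p x) u = cb p u x * sqrt (mink u u)).
  { rewrite mink_dir_u, Hpu. unfold cb. field. lra. }
  unfold line_angle, vec_angle in H. rewrite Edd, Edu in H.
  destruct (angle_alg2 (cb p u x) (cc p u x) (sqrt (mink u u)) phi Hs0) as [Hz Himp].
  apply Himp. apply angle_alg; assumption.
Qed.

Lemma tt_bounds a b c phi : a*a - b*b - c*c = 1 -> 0 < a -> 0 < phi ->
  b*b*((phi/2)*(phi/2)) <= c*c ->
  1 <= (1 + 4/phi) * ((a+b)/sqrt(1+c*c)) <= (1 + 4/phi) * (1 + 4/phi).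
Proof.
  intros N Ha Hp Hb.
  assert (HC2 : sqrt (1+c*c) * sqrt (1+c*c) = 1 + c*c) by (apply sqrt_sqrt; nra).
  assert (HC : 0 < sqrt (1+c*c)) by (apply sqrt_lt_R0; nra).
  set (C := sqrt (1+c*c)) in *.
  set (B := 2 * C / phi).
  assert (HB : B * phi = 2 * C) by (unfold B; field; lra).
  assert (HB0 : 0 < B) by (unfold B; apply Rdiv_lt_0_compat; lra).
  assert (Hbb : b*b <= B*B).
  { apply Rmult_le_reg_r with ((phi/2)*(phi/2)); [nra|].
    replace (B*B*((phi/2)*(phi/2))) with (C*C) by (unfold B; field; lra). nra. }
  assert (Hb1 : - B <= b <= B) by (split; nra).
  assert (HaCB : a <= C + B) by nra.
  assert (HM : (1 + 4/phi) * C = C + 2 * B) by (unfold B; field; lra).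
  assert (Hab : a + b <= C * (1 + 4/phi)) by lra.
  assert (Hab' : a - b <= C * (1 + 4/phi)) by lra.
  assert (HP : 0 < a + b) by nra. assert (HQ : 0 < a - b) by nra.
  assert (HPQ : (a+b)*(a-b) = C*C) by nra.
  assert (HM1 : 1 < 1 + 4/phi) by (assert (0 < 4/phi) by (apply Rdiv_lt_0_compat; lra); lra).
  split.
  - apply Rmult_le_reg_r with C; [lra|].
    replace ((1 + 4/phi) * ((a+b)/C) * C) with ((1+4/phi)*(a+b)) by (field; lra).
    apply Rmult_le_reg_r with (a - b); [lra|]. nra.
  - apply Rmult_le_compat_l; [lra|].
    apply Rmult_le_reg_r with C; [lra|].
    replace ((a+b)/C * C) with (a+b) by (field; lra). lra.
Qed.


Theorem corollary10 :
  exists C : R, 0 < C /\ exists phi0 : R, 0 < phi0 /\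
  forall (r phi : R) (p u : V3) (V : list V3),
    0 < r ->
    0 < phi -> phi <= PI / 2 -> phi <= phi0 ->
    in_H2 p -> tangent_at p u ->
    (forall v, In v V -> in_H2 v) ->
    (forall v, In v V -> v <> p /\ phi <= line_angle (dir p v) u) ->
    exists k : nat,
      clique_coverable r V (near_line p u r) k /\
      INR k <= C * ln (1 / phi) * (1 + 1 / r).
Proof.
  exists 26. split; [lra|]. exists (1/5). split; [lra|].
  intros r phi p u V Hr Hp0 Hp2 Hp5 Hp Hu HV Hang.
  destruct (K_facts r phi Hr Hp0 Hp5) as [HK HKb].
  set (m := r / (1 + r)) in *. set (rho := 1 + m/2) in *. set (M := 1 + 4/phi) in *.
  set (K := Z.to_nat (up (2 * ln M / ln rho))) in *.
  exists (2 * K)%nat. split; [|exact HKb].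
  set (s := sgm (exp r)).
  set (tt := fun x => (ca p x + cb p u x) / sqrt (1 + cc p u x * cc p u x)).
  assert (Hm : 0 < m /\ m <= 1) by (unfold m; split; [apply Rdiv_lt_0_compat; lra| apply Rmult_le_reg_r with (1+r); [lra|]; field_simplify; lra]).
  assert (He : 1 + r <= exp r) by apply exp_ineq1_le.
  assert (Hms : m <= s).
  { unfold s, sgm, m. pose proof (exp_pos r).
    apply Rmult_le_reg_r with ((1+r)*(2*exp r)); [nra|].
    field_simplify; [|lra..].
    assert (0 <= (exp r - (1+r)) * ((exp r + 1 + r)*(1+r) - 2*r)) by (apply Rmult_le_pos; nra).
    nra. }
  assert (Hs0 : 0 <= s) by lra.
  assert (HM0 : 0 < M) by (unfold M; assert (0 < 4/phi) by (apply Rdiv_lt_0_compat; lra); lra).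
  assert (Hrho : 1 < rho) by (unfold rho; lra).
  exists (fun i x => In x V /\ near_line p u r x /\ exists j,
     ((i = 2*j)%nat /\ 0 <= cc p u x \/ (i = 2*j+1)%nat /\ cc p u x <= 0) /\
     rho ^ j <= M * tt x < rho ^ (S j)).
  split; [|split].
  - intros i x [H1 [H2 _]]. auto.
  - intros i x y [Hx [Nx [j [Sx Rx]]]] [Hy [Ny [j' [Sy Ry]]]] _.
    assert (Ejj : j = j' /\ 0 <= cc p u x * cc p u y).
    { destruct Sx as [[-> Sx]|[-> Sx]], Sy as [[Ej Sy]|[Ej Sy]];
        (split; [lia|]); try (exfalso; lia); nra. }
    destruct Ejj as [<- Hcc].
    pose proof (HV x Hx) as HxH. pose proof (HV y Hy) as HyH.
    destruct (norm1 p u x Hp Hu HxH) as [Nx1 Nx2].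
    destruct (norm1 p u y Hp Hu HyH) as [Ny1 Ny2].
    pose proof (vertex_near p u x r Hp Hu HxH Hr Nx) as Cx.
    pose proof (vertex_near p u y r Hp Hu HyH Hr Ny) as Cy.
    assert (Hrj : 0 < rho ^ j) by (apply pow_lt; lra).
    assert (T1 : tt x < rho * tt y).
    { apply Rmult_lt_reg_l with M; [lra|]. simpl in Rx, Ry. nra. }
    assert (T2 : tt y < rho * tt x).
    { apply Rmult_lt_reg_l with M; [lra|]. simpl in Rx, Ry. nra. }
    pose proof (clique_alg _ _ _ _ _ _ s m rho Nx1 Nx2 Ny1 Ny2 Hcc Cx Cy
       (proj1 Hm) (proj2 Hm) Hms eq_refl T1 T2) as Hcl.
    unfold adj, hdist. apply acosh_le; [apply H2_pos; auto| |lra].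
    rewrite (parseval p u x y Hp Hu).
    replace (2 * r) with (r + r) by ring. rewrite exp_plus.
    unfold s, sgm in Hcl. pose proof (exp_pos r).
    set (X := - (- ca p x * ca p y + cb p u x * cb p u y + cc p u x * cc p u y)) in *.
    assert (HX : X <= 1 + 2 * ((exp r ^ 2 - 1) / (2 * exp r) * ((exp r ^ 2 - 1) / (2 * exp r)))) by (unfold X; lra).
    assert (Eq : 2 * (exp r * exp r) * (1 + 2 * ((exp r ^ 2 - 1) / (2 * exp r) * ((exp r ^ 2 - 1) / (2 * exp r))))
                 = (exp r * exp r) ^ 2 + 1) by (field; lra).
    rewrite <- Eq. apply Rmult_le_compat_l; [nra|exact HX].
  - intros x Hx Nx.
    pose proof (HV x Hx) as HxH.
    destruct (norm1 p u x Hp Hu HxH) as [N1 N2].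
    destruct (Hang x Hx) as [_ Ha].
    pose proof (vertex_angle p u x phi Hp Hu HxH Hp0 Hp2 Ha) as VA.
    pose proof (sin_half phi Hp0 Hp5) as SH.
    assert (VA2 : cb p u x * cb p u x * ((phi/2)*(phi/2)) <= cc p u x * cc p u x).
    { assert ((phi/2)*(phi/2) <= sin phi * sin phi) by nra.
      assert (0 <= cb p u x * cb p u x) by nra. nra. }
    destruct (tt_bounds _ _ _ phi N1 N2 Hp0 VA2) as [B1 B2].
    fold M in B1, B2.
    destruct (find_j rho (M * tt x) K Hrho B1 ltac:(fold (tt x) in B2; lra)) as [j [Hj Rj]].
    destruct (Rle_dec 0 (cc p u x)) as [c0|c0].
    + exists (2*j)%nat. split; [lia|]. split; [auto|split; [auto|]]. exists j. split; [left; split; auto|exact Rj].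
    + exists (2*j+1)%nat. split; [lia|]. split; [auto|split; [auto|]]. exists j. split; [right; split; [auto|lra]|exact Rj].
Qed.
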